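(* Let $n\ge 2$ be an integer and $g=3n+2$, and let $G=\{\ell_1<\dots<\ell_g\}$ be a pure $(2n+1)$-sparse gapset of genus $g$. Then there is a unique $\alpha\in[1,g-1]$ such that $\ell_{\alpha+1}-\ell_\alpha=2n+1$.
   Context: A gapset is a finite set $G\subset\mathbb{N}=\{1,2,\dots\}$ such that whenever $z\in G$ and $z=x+y$ with $x,y\in\mathbb{N}$, then $x\in G$ or $y\in G$; its genus is $g=\#G$. $G$ is pure $\kappa$-sparse if $\ell_{i+1}-\ell_i\le\kappa$ for all $i$ with equality for some $i$. *)

(* Defs.v *)
From mathcomp Require Import all_boot.
Set Implicit Arguments. Unset Strict Implicit. Unset Printing Implicit Defensive.

(* A finite set G of positive integers is represented by the strictly
   increasing sequence [:: l_1; ...; l_g] of its elements. *)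

Definition is_gapset (G : seq nat) : Prop :=
  [/\ sorted ltn G,
      all (fun z => 0 < z) G &
      forall z x y, z \in G -> 0 < x -> 0 < y -> z = x + y ->
        (x \in G) \/ (y \in G)].

Definition genus (G : seq nat) : nat := size G.

(* l_i, 1-indexed: ell G i = l_i for 1 <= i <= genus G *)
Definition ell (G : seq nat) (i : nat) : nat := nth 0 G i.-1.

Definition pure_sparse (kappa : nat) (G : seq nat) : Prop :=
  (forall i, 1 <= i -> i < genus G -> ell G i.+1 - ell G i <= kappa) /\
  (exists i, [/\ 1 <= i, i < genus G & ell G i.+1 - ell G i = kappa]).

(* Main.v *)
Require Import Defs.
From mathcomp Require Import all_boot.
From mathcomp Require Import zify.

Lemma mono_nth (G : seq nat) i j : sorted ltn G -> i < j -> j < size G ->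
  nth 0 G i < nth 0 G j.
Proof.
move=> s ij js.
apply: (sorted_ltn_nth ltn_trans 0 s) => //; rewrite inE; lia.
Qed.

Lemma nongap (G : seq nat) k x : sorted ltn G -> 1 <= k -> k < size G ->
  ell G k < x -> x < ell G k.+1 -> x \notin G.
Proof.
rewrite /ell /= => s k1 ks h1 h2; apply/negP => /(nthP 0) [j js hx].
have [jlt|jge] := ltnP j k.
  have : nth 0 G j <= nth 0 G k.-1.
    have [e|ne] := eqVneq j k.-1; first by rewrite e.
    apply: ltnW; apply: mono_nth => //; lia.
  move=> hh; subst x; by have := leq_ltn_trans hh h1; rewrite ltnn.
have : nth 0 G k <= nth 0 G j.
  have [e|ne] := eqVneq j k; first by rewrite e.
  apply: ltnW; apply: mono_nth => //; lia.
move=> hh; subst x; by have := leq_ltn_trans hh h2; rewrite ltnn.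
Qed.

Lemma gapsub (G : seq nat) z x : is_gapset G -> z \in G -> 0 < x -> x < z ->
  x \notin G -> z - x \in G.
Proof.
case=> _ _ H zG x0 xz xn.
have h1 : 0 < z - x by lia.
have h2 : z = x + (z - x) by lia.
case: (H z x (z - x) zG x0 h1 h2) => // xG; by rewrite xG in xn.
Qed.

Lemma ellin (G : seq nat) k : 1 <= k -> k <= size G -> ell G k \in G.
Proof. move=> h1 h2; rewrite /ell; have h : k.-1 < size G by lia. exact: mem_nth. Qed.

Lemma ellgap (G : seq nat) k : sorted ltn G -> 1 <= k -> k < size G ->
  ell G k < ell G k.+1.
Proof. move=> s h1 h2; rewrite /ell /=; apply: mono_nth => //; lia. Qed.

Lemma ellle (G : seq nat) k m : sorted ltn G -> 1 <= k -> k <= m -> m <= size G ->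
  ell G k <= ell G m.
Proof.
move=> s h1 h2 h3; rewrite /ell.
have [e|ne] := eqVneq k m; first by rewrite e.
apply: ltnW; apply: mono_nth => //; lia.
Qed.

Lemma nottwo n (G : seq nat) al be : 2 <= n -> is_gapset G -> size G = 3 * n + 2 ->
  1 <= al -> al < be -> be <= size G - 1 ->
  ell G al.+1 - ell G al = 2 * n + 1 -> ell G be.+1 - ell G be = 2 * n + 1 -> False.
Proof.
move=> n2 gs sz a1 ab bs ea eb.
have s : sorted ltn G by case: gs.
have al_lt : al < size G by lia.
have be_lt : be < size G by lia.
have b1 : 1 <= be by lia.
have ha := ellgap G al s a1 al_lt.
have hb := ellgap G be s b1 be_lt.
have hab : ell G al.+1 <= ell G be by apply: ellle => //; lia.
have inA : ell G al.+1 \in G by apply: ellin => //; lia.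
have inC : ell G be.+1 \in G by apply: ellin => //; lia.
have ng : forall x, ell G al < x -> x < ell G al.+1 -> x \notin G.
  by move=> x; apply: nongap.
move: ha hb hab inA inC ng ea eb.
move: (ell G al) (ell G al.+1) (ell G be) (ell G be.+1) => a a' b c.
move=> ha hb hab inA inC ng ea eb.
pose f i := if i < 2 * n then i.+1 else if i < 4 * n then b - a + 1 + (i - 2 * n) else c.
have fin : forall i, i < 4 * n + 1 -> f i \in G.
  move=> i hi; rewrite /f.
  case: ifP => h1.
    have hx1 : a < a' - i.+1 by lia.
    have hx2 : a' - i.+1 < a' by lia.
    have := @gapsub G a' (a' - i.+1) gs inA _ hx2 (ng _ hx1 hx2).
    have -> : a' - (a' - i.+1) = i.+1 by lia.
    by apply; lia.
  case: ifP => h2; last by [].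
  pose j := i - 2 * n + 1.
  have hx1 : a < a' - j by rewrite /j; lia.
  have hx2 : a' - j < a' by rewrite /j; lia.
  have hx3 : a' - j < c by rewrite /j; lia.
  have := @gapsub G c (a' - j) gs inC _ hx3 (ng _ hx1 hx2).
  have -> : c - (a' - j) = b - a + 1 + (i - 2 * n) by rewrite /j; lia.
  by apply; lia.
have inj : {in iota 0 (4 * n + 1) &, injective f}.
  move=> i j; rewrite !mem_iota /f => hi hj.
  case: ifP => h1; case: ifP => h2; try case: ifP => h3; try case: ifP => h4; lia.
have u : uniq (map f (iota 0 (4 * n + 1))) by rewrite map_inj_in_uniq ?iota_uniq.
have sub : {subset map f (iota 0 (4 * n + 1)) <= G}.
  move=> x /mapP [i]; rewrite mem_iota => hi ->; apply: fin; lia.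
have := uniq_leq_size u sub.
rewrite size_map size_iota sz; lia.
Qed.

Lemma auxle (m i : nat) : i < m -> i <= m - 1.
Proof. lia. Qed.

Theorem mainTheorem19 (n : nat) (G : seq nat) :
  2 <= n ->
  is_gapset G ->
  genus G = 3 * n + 2 ->
  pure_sparse (2 * n + 1) G ->
  exists! alpha : nat,
    (1 <= alpha <= genus G - 1) /\ ell G alpha.+1 - ell G alpha = 2 * n + 1.
Proof.
rewrite /genus => n2 gs sz [_ [i [i1 ig ei]]].
exists i; split.
  split => //; apply/andP; split => //; exact: auxle.
move=> j [/andP [j1 jg] ej].
have [lt|gt|//] := ltngtP i j.
  by case: (@nottwo n G i j n2 gs sz i1 lt jg ei ej).
have ig' : i <= size G - 1 by exact: auxle.
by case: (@nottwo n G j i n2 gs sz j1 gt ig' ej ei).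
Qed.
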